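(* Let $\mathcal{A}$ be a linear hyperplane arrangement in $\mathbb{R}^n$ and let $L_{n-d},L'_{n-d}$ be linear subspaces of $\mathbb{R}^n$ of codimension $d$. If $L_{n-d}$ is in general position with respect to $\mathcal{A}$, then $$\{R\in\mathcal{R}(\mathcal{A}):\bar R\cap L_{n-d}\neq\{0\}\}=\{R\in\mathcal{R}(\mathcal{A}):R\cap L_{n-d}\neq\varnothing\},$$ $$\#\{R\in\mathcal{R}(\mathcal{A}):\bar R\cap L'_{n-d}\neq\{0\}\}\ge\#\{R\in\mathcal{R}(\mathcal{A}):\bar R\cap L_{n-d}\neq\{0\}\},$$ $$\#\{R\in\mathcal{R}(\mathcal{A}):R\cap L'_{n-d}\neq\varnothing\}\le\#\{R\in\mathcal{R}(\mathcal{A}):R\cap L_{n-d}\neq\varnothing\}.$$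
   Context: A linear hyperplane arrangement $\mathcal{A}$ in $\mathbb{R}^n$ is a finite set of distinct hyperplanes through the origin; $\mathcal{R}(\mathcal{A})$ is the set of connected components of $\mathbb{R}^n\setminus\bigcup_{H\in\mathcal{A}}H$; $\bar R$ is the closure of $R$. For $\mathcal{B}\subset\mathcal{A}$, $\mathrm{rank}(\mathcal{B})=n-\dim\bigcap_{H\in\mathcal{B}}H$. A linear subspace $L_{n-d}$ of codimension $d\le n-1$ is in general position w.r.t. $\mathcal{A}$ if for every nonempty $\mathcal{B}\subset\mathcal{A}$, $\dim\bigcap_{H\in\mathcal{B}}(H\cap L_{n-d})$ equals $n-d-\mathrm{rank}(\mathcal{B})$ if $\mathrm{rank}(\mathcal{B})\le n-d$ and $0$ otherwise. *)

(* Defs.v *)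
From HB Require Import structures.
From mathcomp Require Import all_boot all_order all_algebra.
From mathcomp Require Import all_classical all_reals all_analysis.
Set Implicit Arguments. Unset Strict Implicit. Unset Printing Implicit Defensive.
Import Order.TTheory GRing.Theory Num.Theory.
Import numFieldNormedType.Exports.
Local Open Scope classical_set_scope.
Local Open Scope ring_scope.

(* Ambient space R^n is 'rV[R]_n with its (product = Euclidean) topology.
   Linear subspaces are represented by row spaces of square matrices (mxalgebra). *)

Definition hyp_mx (R : realType) n (a : 'rV[R]_n) : 'M[R]_n := kermx a^T.

Definition pts (R : realType) n (L : 'M[R]_n) : set 'rV[R]_n :=
  [set x | (x <= L)%MS].

Definition arrangement (R : realType) n m (a : 'I_m -> 'rV[R]_n) : Prop :=
  (forall i, a i != 0) /\
  (forall i j, pts (hyp_mx (a i)) = pts (hyp_mx (a j)) -> i = j).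

Definition arr_union (R : realType) n m (a : 'I_m -> 'rV[R]_n) : set 'rV[R]_n :=
  [set x | exists i, pts (hyp_mx (a i)) x].

Definition regions (R : realType) n m (a : 'I_m -> 'rV[R]_n) : set (set 'rV[R]_n) :=
  [set C | exists2 x, (~` arr_union a) x &
     C = connected_component (~` arr_union a) x].

Definition arr_rank (R : realType) n m (a : 'I_m -> 'rV[R]_n) (B : {set 'I_m}) : nat :=
  (n - \rank (\bigcap_(i in B) hyp_mx (a i))%MS)%N.

Definition general_position (R : realType) n m (a : 'I_m -> 'rV[R]_n)
    (d : nat) (L : 'M[R]_n) : Prop :=
  forall B : {set 'I_m}, B != finset.set0 ->
    \rank (\bigcap_(i in B) (hyp_mx (a i) :&: L))%MS =
      (if (arr_rank a B <= n - d)%N then (n - d - arr_rank a B)%N else 0%N).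

(* Main.v *)
Require Import Defs.
From HB Require Import structures.
From mathcomp Require Import all_boot all_order all_algebra.
From mathcomp Require Import all_classical all_reals all_analysis.
From mathcomp Require Import ring lra zify.
Import Order.TTheory GRing.Theory Num.Theory.
Import numFieldNormedType.Exports.
Local Open Scope classical_set_scope.
Local Open Scope ring_scope.
Local Open Scope card_scope.

Definition ip {R : realType} {n} (h x : 'rV[R]_n) : R := (x *m h^T) 0 0.

Lemma ipD {R : realType} {n} (h x y : 'rV[R]_n) : ip h (x + y) = ip h x + ip h y.
Proof. by rewrite /ip mulmxDl mxE. Qed.
Lemma ipZ {R : realType} {n} (h x : 'rV[R]_n) c : ip h (c *: x) = c * ip h x.
Proof. by rewrite /ip -scalemxAl mxE. Qed.
Lemma ipN {R : realType} {n} (h x : 'rV[R]_n) : ip h (- x) = - ip h x.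
Proof. by rewrite /ip mulNmx mxE. Qed.
Lemma ipB {R : realType} {n} (h x y : 'rV[R]_n) : ip h (x - y) = ip h x - ip h y.
Proof. by rewrite ipD ipN. Qed.
Lemma ip0 {R : realType} {n} (h : 'rV[R]_n) : ip h 0 = 0.
Proof. by rewrite /ip mul0mx mxE. Qed.

Lemma ip_ker {R : realType} {n} (h x : 'rV[R]_n) :
  (x <= kermx h^T)%MS = (ip h x == 0).
Proof.
apply/idP/idP => [/sub_kermxP H|/eqP H]; first by rewrite /ip H mxE.
by apply/sub_kermxP/matrixP => i j; rewrite !ord1 [RHS]mxE.
Qed.
Definition sg {R : realType} (b : bool) : R := if b then 1 else -1.
Definition cond {R : realType} {n} (h x : 'rV[R]_n) (b : bool) : Prop :=
  0 < sg b * ip h x.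
Definition wcond {R : realType} {n} (h x : 'rV[R]_n) (b : bool) : Prop :=
  0 <= sg b * ip h x.

Fixpoint strict {R : realType} {n} (s : seq 'rV[R]_n) (t : seq bool) (x : 'rV[R]_n) : Prop :=
  match s, t with
  | [::], _ => True
  | h :: s', b :: t' => cond h x b /\ strict s' t' x
  | _ :: _, [::] => False
  end.
Fixpoint weak {R : realType} {n} (s : seq 'rV[R]_n) (t : seq bool) (x : 'rV[R]_n) : Prop :=
  match s, t with
  | [::], _ => True
  | h :: s', b :: t' => wcond h x b /\ weak s' t' x
  | _ :: _, [::] => False
  end.

Fixpoint signs (k : nat) : seq (seq bool) :=
  if k is k'.+1 then map (cons true) (signs k') ++ map (cons false) (signs k')
  else [:: [::]].

Definition Fpred {R : realType} {n} (s : seq 'rV[R]_n) (L : 'M[R]_n) (t : seq bool) : bool :=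
  `[< exists x, (x <= L)%MS /\ strict s t x >].
Definition Gpred {R : realType} {n} (s : seq 'rV[R]_n) (V L : 'M[R]_n) (t : seq bool) : bool :=
  `[< (exists w, (w <= V)%MS /\ strict s t w) /\
      (exists y, (y <= L)%MS /\ y != 0 /\ weak s t y) >].
Definition Fcnt {R : realType} {n} (s : seq 'rV[R]_n) (L : 'M[R]_n) : nat :=
  count (Fpred s L) (signs (size s)).
Definition Gcnt {R : realType} {n} (s : seq 'rV[R]_n) (V L : 'M[R]_n) : nat :=
  count (Gpred s V L) (signs (size s)).

Fixpoint Wc {R : realType} {n} (s : seq 'rV[R]_n) (V : 'M[R]_n) (k : nat) : nat :=
  match s with
  | [::] => 1%N
  | h :: s' => if (V <= kermx h^T)%MS then 0%N else
     if k is k'.+1 then (Wc s' V k + Wc s' (V :&: kermx h^T)%MS k')%N else 0%N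
  end.

Lemma count_signsS (P : pred (seq bool)) k :
  count P (signs k.+1) = (count (fun t => P (true :: t)) (signs k) +
                          count (fun t => P (false :: t)) (signs k))%N.
Proof. by rewrite /= count_cat !count_map. Qed.

Lemma sg_sq {R : realType} b : (sg b : R) * sg b = 1.
Proof. by case: b; rewrite /sg ?mulr1 ?mulrNN ?mulr1. Qed.

Lemma rank_capH {R : realType} {n} (L : 'M[R]_n) (h : 'rV[R]_n) :
  (\rank L <= (\rank (L :&: kermx h^T)%MS).+1)%N /\
  (~~ (L <= kermx h^T)%MS -> \rank (L :&: kermx h^T)%MS = (\rank L).-1).
Proof.
have E := mxrank_mul_ker L h^T.
have le1 := rank_leq_col (L *m h^T).
move: E le1; rewrite sub_kermx -mxrank_eq0.
set r := \rank (L *m h^T); set c := \rank (_ :&: _).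
by move=> E le1; split => [|nz]; lia.
Qed.

Lemma exists_nonzero {R : realType} {n} (L : 'M[R]_n) :
  (0 < \rank L)%N -> exists y : 'rV[R]_n, (y <= L)%MS /\ y != 0.
Proof.
rewrite lt0n mxrank_eq0 => /eqP nz.
have : ~~ (L <= (0 : 'M[R]_n))%MS by rewrite submx0; apply/eqP.
by case/row_subPn => i Hi; exists (row i L); rewrite row_sub -submx0.
Qed.

Lemma exists_offH {R : realType} {n} (V : 'M[R]_n) (h : 'rV[R]_n) :
  ~~ (V <= kermx h^T)%MS -> exists z, (z <= V)%MS /\ 0 < ip h z.
Proof.
case/row_subPn => i; rewrite ip_ker => Hi.
case: (ltrgt0P (ip h (row i V))) Hi => // [pos|neg] _.
  by exists (row i V); rewrite row_sub.
by exists (- row i V); rewrite eqmx_opp row_sub ipN oppr_gt0.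
Qed.
Arguments exists_offH {R n V h}.
Arguments exists_nonzero {R n L}.

Lemma strict_weak {R : realType} {n} (s : seq 'rV[R]_n) t x :
  strict s t x -> weak s t x.
Proof.
elim: s t => [|h s IH] [|b t] //= [H1 H2]; split; last exact: IH.
by rewrite /wcond ltW.
Qed.

Lemma strict_comb {R : realType} {n} (s : seq 'rV[R]_n) t y w (al be : R) :
  weak s t y -> strict s t w -> 0 <= al -> 0 < be ->
  strict s t (al *: y + be *: w).
Proof.
move=> + + al0 be0.
elim: s t => [|h s IH] [|b t] //= [Hy1 Hy] [Hw1 Hw]; split; last exact: IH.
move: Hy1 Hw1; rewrite /cond /wcond ipD !ipZ => H1 H2.
have -> : sg b * (al * ip h y + be * ip h w) = al * (sg b * ip h y) + be * (sg b * ip h w) by ring.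
by apply: ltr_wpDl; [apply: mulr_ge0|apply: mulr_gt0].
Qed.

Lemma weak_comb {R : realType} {n} (s : seq 'rV[R]_n) t y w (al be : R) :
  weak s t y -> weak s t w -> 0 <= al -> 0 <= be ->
  weak s t (al *: y + be *: w).
Proof.
move=> + + al0 be0.
elim: s t => [|h s IH] [|b t] //= [Hy1 Hy] [Hw1 Hw]; split; last exact: IH.
move: Hy1 Hw1; rewrite /cond /wcond ipD !ipZ => H1 H2.
have -> : sg b * (al * ip h y + be * ip h w) = al * (sg b * ip h y) + be * (sg b * ip h w) by ring.
by apply: addr_ge0; apply: mulr_ge0.
Qed.

Lemma perturb {R : realType} {n} (s : seq 'rV[R]_n) t x z :
  strict s t x -> exists2 e : R, 0 < e & forall u, `|u| <= e -> strict s t (x + u *: z).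
Proof.
elim: s t => [|h s IH] [|b t] //=; [by move=> _; exists 1|by move=> _; exists 1|].
move=> [H1 /IH [e1 e10 He1]].
set c := sg b * ip h x; set d := sg b * ip h z.
have c0 : 0 < c by [].
have d0 : 0 <= `|d| by [].
set e2 := c / (`|d| + 1).
have e20 : 0 < e2 by apply: divr_gt0 => //; rewrite ltr_wpDl.
have he2 : e2 * (`|d| + 1) = c by rewrite /e2 mulfVK // gt_eqF // ltr_wpDl.
exists (Num.min e1 e2); first by rewrite lt_min e10 e20.
move=> u; rewrite le_min => /andP [u1 u2]; split; last exact: He1.
rewrite /cond ipD ipZ.
have -> : sg b * (ip h x + u * ip h z) = c + u * d by rewrite /c /d; ring.
have hn : - (`|u| * `|d|) <= u * d.
  by rewrite -normrM lerNl -normrN ler_norm.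
have u0 : 0 <= `|u| by [].
nra.
Qed.

Lemma count0 {T : Type} (P : pred T) l : (forall x, P x = false) -> count P l = 0%N.
Proof. by move=> H; rewrite (eq_count H) count_pred0. Qed.

Lemma sg_choice {R : realType} (r : R) : r != 0 -> 0 < sg (0 < r) * r.
Proof.
by case: (ltrgt0P r) => // H _; rewrite /sg ?mul1r ?mulN1r ?oppr_gt0.
Qed.

Lemma Fpred_cons_false {R : realType} {n} (h : 'rV[R]_n) s L b t :
  (forall x, (x <= L)%MS -> ip h x = 0) -> Fpred (h :: s) L (b :: t) = false.
Proof.
move=> H; apply: asboolF => -[x [xL [c _]]].
by move: c; rewrite /cond H // mulr0 ltxx.
Qed.

Lemma F_le {R : realType} {n} (s : seq 'rV[R]_n) (V L : 'M[R]_n) k :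
  (L <= V)%MS -> \rank L = k -> (Fcnt s L <= Wc s V k)%N.
Proof.
elim: s V L k => [|h s IH] V L k LV rk.
  by rewrite /Fcnt /= addn0; case: (Fpred _ _ _).
rewrite /Fcnt [size _]/= count_signsS /=.
have allF : (forall x, (x <= L)%MS -> ip h x = 0) ->
   (count (fun t => Fpred (h :: s) L (true :: t)) (signs (size s)) +
    count (fun t => Fpred (h :: s) L (false :: t)) (signs (size s)) = 0)%N.
  by move=> H; rewrite !count0 // => t; apply: Fpred_cons_false.
case: ifP => VH.
  rewrite allF // => x xL; apply/eqP; rewrite -ip_ker.
  exact: submx_trans xL (submx_trans LV VH).
case: k rk => [|k] rk.
  rewrite allF // => x xL; move/eqP: rk; rewrite mxrank_eq0 => /eqP L0.
  by move: xL; rewrite L0 submx0 => /eqP ->; rewrite ip0.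
case: (boolP (L <= kermx h^T)%MS) => LH.
  by rewrite allF // => x xL; apply/eqP; rewrite -ip_ker; exact: submx_trans xL LH.
rewrite -count_predUI; apply: leq_add.
  apply: (leq_trans _ (IH V L k.+1 LV rk)); apply: sub_count => t /orP [] /asboolP [x [xL [_ Hx]]];
  by apply/asboolP; exists x.
have [_ r2] := rank_capH L h.
apply: (leq_trans _ (IH (V :&: kermx h^T)%MS (L :&: kermx h^T)%MS k _ _)); last first.
- by rewrite r2 // rk.
- exact: capmxS.
apply: sub_count => t /andP [/asboolP [y [yL [c1 Hy]]] /asboolP [w [wL [c2 Hw]]]].
move: c1 c2; rewrite /cond /sg mul1r mulN1r oppr_gt0 => c1 c2.
apply/asboolP; exists ((- ip h w) *: y + ip h y *: w); split.
  rewrite sub_capmx addmx_sub ?scalemx_sub //= ip_ker ipD !ipZ.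
  by apply/eqP; ring.
by apply: strict_comb => //; [exact: strict_weak|rewrite oppr_ge0 ltW].
Qed.

Lemma G_I {R : realType} {n} (h : 'rV[R]_n) s (V L : 'M[R]_n) t b :
  ~~ (V <= kermx h^T)%MS -> Gpred s (V :&: kermx h^T)%MS (L :&: kermx h^T)%MS t ->
  Gpred (h :: s) V L (b :: t).
Proof.
move=> VH /asboolP [[w [wV Hw]] [y [yL [y0 Hy]]]]; apply/asboolP.
move: wV yL; rewrite !sub_capmx !ip_ker => /andP [wV /eqP w0] /andP [yL /eqP y0'].
have [z [zV zpos]] := exists_offH VH.
have [e e0 He] := @perturb _ _ _ _ _ z Hw.
split.
  exists (w + (sg b * e) *: z); split; first by rewrite addmx_sub ?scalemx_sub.
  split; last by apply: He; rewrite normrM (gtr0_norm e0) /sg; case: b; rewrite ?normrN normr1 mul1r.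
  rewrite /cond ipD ipZ w0 add0r mulrA mulrA sg_sq mul1r.
  exact: mulr_gt0.
exists y; split => //; split => //; split => //.
by rewrite /wcond y0' mulr0.
Qed.

Lemma G_U {R : realType} {n} (h : 'rV[R]_n) s (V L : 'M[R]_n) t :
  (L <= V)%MS -> ~~ (V <= kermx h^T)%MS -> Gpred s V L t ->
  exists b, Gpred (h :: s) V L (b :: t).
Proof.
move=> LV VH /asboolP [[w [wV Hw]] [y [yL [y0 Hy]]]].
have [w1 [w1V Hw1 nz1]] : exists w1, [/\ (w1 <= V)%MS, strict s t w1 & ip h w1 != 0].
  case: (eqVneq (ip h w) 0) => Hw0; last by exists w.
  have [z [zV zpos]] := exists_offH VH.
  have [e e0 He] := @perturb _ _ _ _ _ z Hw.
  exists (w + e *: z); split.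
  - by rewrite addmx_sub ?scalemx_sub.
  - by apply: He; rewrite gtr0_norm.
  - by rewrite ipD ipZ Hw0 add0r mulf_neq0 // gt_eqF.
case: (eqVneq (ip h y) 0) => Hy0.
  exists (0 < ip h w1); apply/asboolP; split.
    by exists w1; split => //; split => //; exact: sg_choice.
  by exists y; split => //; split => //; split => //; rewrite /wcond Hy0 mulr0.
exists (0 < ip h y); apply/asboolP.
have cy := sg_choice _ Hy0.
have [e e0 He] := @perturb _ _ [:: h] [:: 0 < ip h y] y (w1 - y) (conj cy I).
set u := e / (1 + e).
have u0 : 0 < u by apply: divr_gt0 => //; rewrite ltr_wpDl.
have u1 : u < 1 by rewrite ltr_pdivrMr; lra.
have ue : `|u| <= e.
  rewrite gtr0_norm // ler_pdivrMr; last by lra.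
  by rewrite mulrDr mulr1; nra.
split; last first.
  by exists y; split => //; split => //; split => //; exact: ltW.
exists ((1 - u) *: y + u *: w1); split.
  by rewrite addmx_sub ?scalemx_sub // (submx_trans yL LV).
have E : (1 - u) *: y + u *: w1 = y + u *: (w1 - y).
  by apply/rowP => i; rewrite !mxE; ring.
split; first by have [] := He u ue; rewrite E.
by apply: strict_comb => //; rewrite subr_ge0 ltW.
Qed.

Lemma G_base {R : realType} {n} (h : 'rV[R]_n) (V L : 'M[R]_n) b :
  ~~ (V <= kermx h^T)%MS -> (0 < \rank L)%N -> Gpred [:: h] V L [:: b].
Proof.
move=> VH rL; apply/asboolP.
have [z [zV zpos]] := exists_offH VH.
have [y [yL y0]] := exists_nonzero rL.
split.
  exists (sg b *: z); split; first by rewrite scalemx_sub.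
  by split => //; rewrite /cond ipZ mulrA sg_sq mul1r.
pose c : R := if 0 <= sg b * ip h y then 1 else -1.
exists (c *: y); split; first by rewrite scalemx_sub.
split; first by rewrite scaler_eq0 negb_or y0 andbT /c; case: ifP => _; rewrite ?oppr_eq0 oner_eq0.
split => //; rewrite /wcond ipZ /c.
have -> : sg b * ((if 0 <= sg b * ip h y then 1 else -1) * ip h y) =
   (if 0 <= sg b * ip h y then 1 else -1) * (sg b * ip h y) by ring.
case: ifP => H; first by rewrite mul1r.
by rewrite mulN1r oppr_ge0 ltW // ltNge H.
Qed.

Lemma G_ge {R : realType} {n} (s : seq 'rV[R]_n) (V L : 'M[R]_n) k :
  (L <= V)%MS -> (0 < k)%N -> (k <= \rank L)%N -> (Wc s V k <= Gcnt s V L)%N.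
Proof.
elim: s V L k => [|h s IH] V L k LV k0 kr.
  rewrite /Gcnt /= addn0 lt0b; apply/asboolP; split; first by exists 0; rewrite sub0mx.
  have [y [yL y0]] := exists_nonzero (leq_trans k0 kr).
  by exists y.
rewrite /=; case: ifP => VH //; move/negbT: VH => VH.
case: k k0 kr => // k _ kr.
rewrite /Gcnt [size _]/= count_signsS -count_predUI; apply: leq_add.
  apply: (leq_trans (IH V L k.+1 LV isT kr)); apply: sub_count => t /(@G_U _ _ h s V L t LV VH) [[]] Ht.
    by rewrite /= Ht.
  by rewrite /= Ht orbT.
case: k kr => [|k] kr.
  case: s IH => [|h' s'] IH; last by rewrite /=; case: ifP.
  by rewrite /= addn0 lt0b; apply/andP; split; apply: G_base => //; apply: leq_trans kr.
have [r1 _] := rank_capH L h.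
apply: (leq_trans (IH (V :&: kermx h^T)%MS (L :&: kermx h^T)%MS k.+1 _ isT _)).
- exact: capmxS.
- by rewrite -ltnS (leq_trans kr r1).
- rewrite /Gcnt; apply: sub_count => t Ht; apply/andP; split; exact: G_I.
Qed.

Lemma ip_cont {R : realType} {n} (h : 'rV[R]_n) : continuous (ip h).
Proof.
have -> : ip h = (fun x => \sum_(j < n) x 0 j * h 0 j).
  by apply/funext => x; rewrite /ip !mxE; apply: eq_bigr => j _; rewrite mxE.
move=> x; elim: (index_enum 'I_n) => [|j r IH].
  under eq_fun do rewrite big_nil.
  exact: cst_continuous.
under eq_fun do rewrite big_cons.
apply: (@continuousD _ _ _ (fun y : 'rV[R]_n => y 0 j * h 0 j)) => //.
apply: (@continuousM _ _ (fun y : 'rV[R]_n => y 0 j) (fun _ => h 0 j)).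
  exact: coord_continuous.
exact: cst_continuous.
Qed.

Lemma mem_signs t k : (t \in signs k) = (size t == k).
Proof.
elim: k t => [|k IH] [|b t] //=.
  by rewrite mem_cat; apply/negP => /orP [] /mapP [? _].
have ci (c : bool) : injective (cons c) by move=> x y [].

rewrite mem_cat eqSS -IH; case: b; rewrite (mem_map (ci _)).
  have -> : (true :: t \in map (cons false) (signs k)) = false.
    by apply/negP => /mapP [? _ []].
  by rewrite orbF.
have -> : (false :: t \in map (cons true) (signs k)) = false.
  by apply/negP => /mapP [? _ []].
by [].
Qed.

Lemma uniq_signs k : uniq (signs k).
Proof.
have ci (c : bool) : injective (cons c) by move=> x y [].
elim: k => [//|k IH] /=; rewrite cat_uniq !(map_inj_uniq (ci _)) IH /= andbT.
by apply/hasPn => t /mapP [u _ ->]; apply/mapP => -[v _].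
Qed.

Lemma strict_nth {R : realType} {n} (s : seq 'rV[R]_n) t x :
  size t = size s ->
  strict s t x <-> (forall i, (i < size s)%N -> cond (nth 0 s i) x (nth false t i)).
Proof.
elim: s t => [|h s IH] [|b t] //= [st]; split.
- by move=> [c /(IH _ st) H] [|i] //= /H.
- move=> H; split; first exact: (H 0%N).
  by apply/(IH _ st) => i; exact: (H i.+1).
Qed.

Lemma weak_nth {R : realType} {n} (s : seq 'rV[R]_n) t x :
  size t = size s ->
  weak s t x <-> (forall i, (i < size s)%N -> wcond (nth 0 s i) x (nth false t i)).
Proof.
elim: s t => [|h s IH] [|b t] //= [st]; split.
- by move=> [c /(IH _ st) H] [|i] //= /H.
- move=> H; split; first exact: (H 0%N).
  by apply/(IH _ st) => i; exact: (H i.+1).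
Qed.

Definition cell {R : realType} {n} (s : seq 'rV[R]_n) t : set 'rV[R]_n := [set x | strict s t x].
Definition wcell {R : realType} {n} (s : seq 'rV[R]_n) t : set 'rV[R]_n := [set x | weak s t x].

Lemma open_cell {R : realType} {n} (s : seq 'rV[R]_n) t : open (cell s t).
Proof.
elim: s t => [|h s IH] [|b t]; rewrite /cell /=; [exact: openT|exact: openT|exact: open0|].
apply: (@openI _ [set x | cond h x b] (cell s t)) => //.
have -> : [set x | cond h x b] = (fun x => sg b * ip h x) @^-1` [set y | 0 < y] by [].
apply: open_comp; last exact: open_gt.
move=> x _; apply: (@continuousM _ _ (fun _ => sg b)); first exact: cst_continuous.
exact: ip_cont.
Qed.

Lemma closed_wcell {R : realType} {n} (s : seq 'rV[R]_n) t : closed (wcell s t).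
Proof.
elim: s t => [|h s IH] [|b t]; rewrite /wcell /=; [exact: closedT|exact: closedT|exact: closed0|].
apply: (@closedI _ [set x | wcond h x b] (wcell s t)) => //.
have -> : [set x | wcond h x b] = (fun x => sg b * ip h x) @^-1` [set y | 0 <= y] by [].
apply: closed_comp; last exact: closed_ge.
move=> x _; apply: (@continuousM _ _ (fun _ => sg b)); first exact: cst_continuous.
exact: ip_cont.
Qed.

Lemma cell_convex {R : realType} {n} (s : seq 'rV[R]_n) t y w (u : R) :
  strict s t y -> strict s t w -> 0 <= u -> u <= 1 ->
  strict s t ((1 - u) *: y + u *: w).
Proof.
move=> Hy Hw u0; rewrite le_eqVlt => /orP [/eqP ->|u1].
  by rewrite subrr scale0r add0r scale1r.
rewrite addrC; apply: strict_comb => //; first exact: strict_weak.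
by rewrite subr_gt0.
Qed.

Lemma lin_cont {R : realType} {n} (y w : 'rV[R]_n) :
  continuous (fun u : R => (1 - u) *: y + u *: w).
Proof.
move=> u; apply: (@continuousD _ _ _ (fun u : R => (1 - u) *: y) (fun u : R => u *: w)).
  apply: (@continuousZr_tmp _ _ _ (fun u : R => 1 - u)).
  by apply: cvgB; [exact: cvg_cst|exact: cvg_id].
by apply: (@continuousZr_tmp _ _ _ (fun u : R => u)).
Qed.

Lemma connected_cell {R : realType} {n} (s : seq 'rV[R]_n) t x0 :
  strict s t x0 -> connected (cell s t).
Proof.
move=> H0.
pose seg y := (fun u : R => (1 - u) *: x0 + u *: y) @` `[0, 1].
have -> : cell s t = \bigcup_(y in cell s t) seg y.
  apply/seteqP; split => [y Hy|y [w Hw [u]]].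
    exists y => //; exists 1; first by rewrite /= in_itv /= ler01 lexx.
    by rewrite subrr scale0r add0r scale1r.
  rewrite /= in_itv /= => /andP [u0 u1] <-.
  exact: cell_convex.
apply: bigcup_connected.
  exists x0 => y _; exists 0; first by rewrite /= in_itv /= lexx ler01.
  by rewrite subr0 scale1r scale0r addr0.
move=> y _; apply: connected_continuous_connected; first exact: segment_connected.
by apply: continuous_subspaceT; exact: lin_cont.
Qed.
Arguments connected_cell {R n s t x0}.

Lemma closure_cell {R : realType} {n} (s : seq 'rV[R]_n) t w :
  strict s t w -> closure (cell s t) = wcell s t.
Proof.
move=> Hw; apply/seteqP; split.
  rewrite [X in _ `<=` X](proj1 (closure_id _) (closed_wcell s t)).
  by apply: closureS => x; exact: strict_weak.
move=> y Hy B By.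
pose f := fun u : R => (1 - u) *: y + u *: w.
have f0 : f 0 = y by rewrite /f subr0 scale1r scale0r addr0.
have : nbhs (0 : R) (f @^-1` B) by apply: (lin_cont y w 0); move: By; rewrite -{1}f0; exact.
case/nbhs_ballP => e /= e0 He.
pose u := Num.min (e / 2) 1.
have u0 : 0 < u by rewrite lt_min ltr01 andbT divr_gt0.
have u1 : u <= 1 by rewrite ge_min lexx orbT.
have ue : u < e by rewrite gt_min ltr_pdivrMr // ltr_pMr // ltr1n.
exists (f u); split; last first.
  apply: He; rewrite /ball /= sub0r normrN gtr0_norm //.
by apply: strict_comb => //; rewrite subr_ge0.
Qed.
Arguments closure_cell {R n s t w}.

Definition sa {R : realType} {n m} (a : 'I_m -> 'rV[R]_n) := [seq a i | i <- enum 'I_m].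
Definition sgv {R : realType} {n m} (a : 'I_m -> 'rV[R]_n) x := [seq 0 < ip (a i) x | i <- enum 'I_m].

Lemma size_sa {R : realType} {n m} (a : 'I_m -> 'rV[R]_n) : size (sa a) = m.
Proof. by rewrite size_map size_enum_ord. Qed.

Lemma nth_sa {R : realType} {n m} (a : 'I_m -> 'rV[R]_n) (i : 'I_m) : nth 0 (sa a) i = a i.
Proof. by rewrite (nth_map i) ?size_enum_ord // nth_ord_enum. Qed.

Lemma size_sgv {R : realType} {n m} (a : 'I_m -> 'rV[R]_n) x : size (sgv a x) = m.
Proof. by rewrite size_map size_enum_ord. Qed.

Lemma nth_sgv {R : realType} {n m} (a : 'I_m -> 'rV[R]_n) x (i : 'I_m) :
  nth false (sgv a x) i = (0 < ip (a i) x).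
Proof. by rewrite (nth_map i) ?size_enum_ord // nth_ord_enum. Qed.

Lemma strictP {R : realType} {n m} (a : 'I_m -> 'rV[R]_n) t x : size t = m ->
  strict (sa a) t x <-> forall i : 'I_m, cond (a i) x (nth false t i).
Proof.
move=> st; have st' : size t = size (sa a) by rewrite size_sa.
split => [/(strict_nth _ _ _ st') H|H].
  by move=> i; rewrite -nth_sa; apply: H; rewrite size_sa.
apply/(strict_nth _ _ _ st') => i; rewrite size_sa => im.
by have := H (Ordinal im); rewrite -nth_sa.
Qed.
Arguments strictP {R n m a t x}.

Lemma weakP {R : realType} {n m} (a : 'I_m -> 'rV[R]_n) t x : size t = m ->
  weak (sa a) t x <-> forall i : 'I_m, wcond (a i) x (nth false t i).
Proof.
move=> st; have st' : size t = size (sa a) by rewrite size_sa.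
split => [/(weak_nth _ _ _ st') H|H].
  by move=> i; rewrite -nth_sa; apply: H; rewrite size_sa.
apply/(weak_nth _ _ _ st') => i; rewrite size_sa => im.
by have := H (Ordinal im); rewrite -nth_sa.
Qed.
Arguments weakP {R n m a t x}.

Lemma cond_sign {R : realType} {n} (h x : 'rV[R]_n) b : cond h x b -> b = (0 < ip h x).
Proof.
rewrite /cond /sg; case: b; rewrite ?mul1r // mulN1r oppr_gt0 => H.
by apply/esym/negbTE; rewrite -leNgt ltW.
Qed.

Lemma cond_nz {R : realType} {n} (h x : 'rV[R]_n) b : cond h x b -> ip h x != 0.
Proof. by rewrite /cond => H; apply/eqP => E; move: H; rewrite E mulr0 ltxx. Qed.

Lemma compl_union {R : realType} {n m} (a : 'I_m -> 'rV[R]_n) x :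
  (~` arr_union a) x <-> forall i, ip (a i) x != 0.
Proof.
split.
  by move=> H i; apply/negP => /eqP E; apply: H; exists i; rewrite /pts /hyp_mx /= ip_ker E.
by move=> H [i]; rewrite /pts /hyp_mx /= ip_ker; apply/negP.
Qed.

Lemma strict_sgv {R : realType} {n m} (a : 'I_m -> 'rV[R]_n) x :
  (forall i, ip (a i) x != 0) -> strict (sa a) (sgv a x) x.
Proof.
move=> H; apply/strictP; first exact: size_sgv.
by move=> i; rewrite nth_sgv; apply: sg_choice.
Qed.
Arguments strict_sgv {R n m a x}.

Lemma strict_nz {R : realType} {n m} (a : 'I_m -> 'rV[R]_n) t x :
  size t = m -> strict (sa a) t x -> forall i, ip (a i) x != 0.
Proof. by move=> st /(strictP st) H i; apply: cond_nz (H i). Qed.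
Arguments strict_nz {R n m a t x}.

Lemma strict_sgv_eq {R : realType} {n m} (a : 'I_m -> 'rV[R]_n) t x :
  size t = m -> strict (sa a) t x -> t = sgv a x.
Proof.
move=> st /(strictP st) H.
apply: (@eq_from_nth _ false); first by rewrite size_sgv.
move=> i; rewrite st => im; have := H (Ordinal im); rewrite (nth_sgv a x (Ordinal im)).
exact: cond_sign.
Qed.
Arguments strict_sgv_eq {R n m a t x}.

Lemma weak_strict {R : realType} {n m} (a : 'I_m -> 'rV[R]_n) t x :
  size t = m -> weak (sa a) t x -> (forall i, ip (a i) x != 0) -> strict (sa a) t x.
Proof.
move=> st /(weakP st) H nz; apply/strictP => // i.
have := H i; rewrite /wcond /cond le_eqVlt => /orP [/eqP E|//].
exfalso; move: E; rewrite /sg; case: (nth false t i) => /esym /eqP;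
  by rewrite ?mul1r ?mulN1r ?oppr_eq0 (negbTE (nz i)).
Qed.
Arguments weak_strict {R n m a t x}.

Lemma component_cell {R : realType} {n m} (a : 'I_m -> 'rV[R]_n) x0 :
  (forall i, ip (a i) x0 != 0) ->
  connected_component (~` arr_union a) x0 = cell (sa a) (sgv a x0).
Proof.
move=> H0; apply/seteqP; split; last first.
  apply: connected_component_max.
  - exact: strict_sgv.
  - by move=> y Hy; apply/compl_union; exact: (strict_nz (size_sgv a x0) Hy).
  - exact: (connected_cell (strict_sgv H0)).
set K := connected_component _ _.
have KO : K `<=` ~` arr_union a by apply: connected_component_sub.
have Kx0 : K x0 by apply: connected_component_refl; apply/compl_union.
suff <- : K `&` cell (sa a) (sgv a x0) = K by move=> y [].
have CC : connected K by exact: component_connected.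
apply: CC.
- by exists x0; split => //; apply: strict_sgv.
- by exists (cell (sa a) (sgv a x0)) => //; exact: open_cell.
- exists (wcell (sa a) (sgv a x0)); first exact: closed_wcell.
  apply/seteqP; split => y [Ky Hy]; split => //; first exact: strict_weak.
  apply: weak_strict => //; first exact: size_sgv.
  by apply/compl_union; apply: KO.
Qed.

Lemma regionsP {R : realType} {n m} (a : 'I_m -> 'rV[R]_n) C :
  regions a C <-> exists t, [/\ size t = m, (exists w, strict (sa a) t w) & C = cell (sa a) t].
Proof.
split.
  case=> x0 /compl_union H0 ->; exists (sgv a x0); split.
  - exact: size_sgv.
  - by exists x0; apply: strict_sgv.
  - exact: component_cell.
case=> t [st [w Hw] ->]; have nz := strict_nz st Hw.
exists w; first by apply/compl_union.
by rewrite component_cell // -(strict_sgv_eq st Hw).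
Qed.

Lemma cell_inj {R : realType} {n m} (a : 'I_m -> 'rV[R]_n) t1 t2 w :
  size t1 = m -> size t2 = m -> strict (sa a) t1 w ->
  cell (sa a) t1 = cell (sa a) t2 -> t1 = t2.
Proof.
move=> s1 s2 H E; have H2 : cell (sa a) t2 w by rewrite -E.
by rewrite (strict_sgv_eq s1 H) (strict_sgv_eq s2 H2).
Qed.
Arguments cell_inj {R n m a t1 t2 w}.

Lemma small_pert {R : realType} {I : eqType} (r : seq I) (P : I -> Prop) (c d : I -> R) :
  (forall i, P i -> 0 < c i) ->
  exists2 e : R, 0 < e & forall u, `|u| <= e -> forall i, i \in r -> P i -> 0 < c i + u * d i.
Proof.
move=> Hc; elim: r => [|j r [e1 e10 He1]]; first by exists 1.
case: (pselect (P j)) => Pj; last first.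
  exists e1 => // u ue i; rewrite inE => /orP [/eqP -> //|]; exact: He1.
have c0 := Hc j Pj.
set e2 := c j / (`|d j| + 1).
have e20 : 0 < e2 by apply: divr_gt0 => //; rewrite ltr_wpDl.
have he2 : e2 * (`|d j| + 1) = c j by rewrite /e2 mulfVK // gt_eqF // ltr_wpDl.
exists (Num.min e1 e2); first by rewrite lt_min e10 e20.
move=> u; rewrite le_min => /andP [u1 u2] i; rewrite inE => /orP [/eqP ->|]; last exact: He1.
move=> _.
have hn : - (`|u| * `|d j|) <= u * d j.
  by rewrite -normrM lerNl -normrN ler_norm.
have u0 : 0 <= `|u| by [].
have d0 : 0 <= `|d j| by [].
nra.
Qed.

Lemma claim1_pred {R : realType} {n m d : nat} (a : 'I_m -> 'rV[R]_n) (L : 'M[R]_n) t :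
  (d < n)%N -> \rank L = (n - d)%N -> general_position a d L -> size t = m ->
  Gpred (sa a) 1%:M L t = Fpred (sa a) L t.
Proof.
move=> dn rk gp st.
have rL : (0 < \rank L)%N by rewrite rk subn_gt0.
apply/idP/idP; last first.
  move/asboolP => [x [xL Hx]]; apply/asboolP; split; first by exists x; rewrite submx1.
  have [z [zL z0]] := exists_nonzero rL.
  have [e e0 He] := @perturb _ _ _ _ _ z Hx.
  case: (eqVneq x 0) => [x0|xn0].
    exists (x + e *: z); split; first by rewrite addmx_sub ?scalemx_sub.
    split; first by rewrite x0 add0r scaler_eq0 negb_or z0 andbT gt_eqF.
    by apply: strict_weak; apply: He; rewrite gtr0_norm.
  by exists x; split => //; split => //; exact: strict_weak.
move/asboolP => [[w [_ Hw]] [y [yL [y0 Hy]]]]; apply/asboolP.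
pose B : {set 'I_m} := [set i | ip (a i) y == 0]%SET.
case: (eqVneq B finset.set0) => [B0|Bn0].
  exists y; split => //; apply: weak_strict => // i.
  have : i \notin B by rewrite B0 finset.in_set0.
  by rewrite /B inE.
have := gp B Bn0.
set X := (\bigcap_(i in B) hyp_mx (a i))%MS.
have [i0 i0B] := set0Pn _ Bn0.
have -> : \rank (\bigcap_(i in B) (hyp_mx (a i) :&: L))%MS = \rank (X :&: L)%MS.
  apply/eqP; rewrite eqn_leq; apply/andP; split; apply: mxrankS.
    rewrite sub_capmx; apply/andP; split.
      by apply/sub_bigcapmxP => i iB; apply: (bigcapmx_inf _ iB); exact: capmxSl.
    by apply: (bigcapmx_inf _ i0B); exact: capmxSr.
  apply/sub_bigcapmxP => i iB; rewrite sub_capmx capmxSr andbT.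
  by apply: submx_trans (capmxSl _ _) _; apply: (bigcapmx_inf _ iB).
have yX : (y <= X :&: L)%MS.
  rewrite sub_capmx yL andbT; apply/sub_bigcapmxP => i iB.
  by rewrite /hyp_mx ip_ker; move: iB; rewrite /B inE.
have r1 : (1 <= \rank (X :&: L))%N by have := mxrankS yX; rewrite rank_rV y0.
rewrite /arr_rank -/X => rXL.
have rX := rank_leq_col X.
have E := mxrank_sum_cap X L.
have full : row_full (X + L)%MS.
  rewrite /row_full; move: rXL E r1 rX; rewrite rk.
  case: ifP => _ rXL; rewrite rXL => E r1 rX; last by lia.
  apply/eqP; lia.
have /sub_addsmxP [[u1 u2] /= wE] := submx_full w full.
set z := u2 *m L.
have zL : (z <= L)%MS by apply: submxMl.
have zB : forall i, i \in B -> ip (a i) z = ip (a i) w.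
  move=> i iB.
  have : (u1 *m X <= hyp_mx (a i))%MS by apply: submx_trans (submxMl _ _) (bigcapmx_inf _ iB _).
  by rewrite /hyp_mx ip_ker wE ipD => /eqP ->; rewrite add0r.
have /(weakP st) Hy' := Hy.
have /(strictP st) Hw' := Hw.
have Hc : forall i, i \notin B -> 0 < sg (nth false t i) * ip (a i) y.
  move=> i; rewrite /B inE => nz; have := Hy' i; rewrite /wcond le_eqVlt => /orP [/eqP E'|//].
  move: E'; rewrite /sg; case: (nth false t i) => /esym /eqP;
    by rewrite ?mul1r ?mulN1r ?oppr_eq0 (negbTE nz).
have [e e0 He] := @small_pert R _ (enum 'I_m) (fun i => i \notin B)
   (fun i => sg (nth false t i) * ip (a i) y) (fun i => sg (nth false t i) * ip (a i) z) Hc.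
exists (y + e *: z); split; first by rewrite addmx_sub ?scalemx_sub.
apply/(strictP st) => i; rewrite /cond ipD ipZ.
have -> : sg (nth false t i) * (ip (a i) y + e * ip (a i) z) =
   sg (nth false t i) * ip (a i) y + e * (sg (nth false t i) * ip (a i) z) by ring.
case: (boolP (i \in B)) => iB; last by apply: He; rewrite ?gtr0_norm ?mem_enum.
move: (iB); rewrite /B inE => /eqP ->; rewrite mulr0 add0r zB //.
by apply: mulr_gt0 => //; exact: Hw'.
Qed.

Lemma seq_card_le {T : eqType} (l1 l2 : seq T) :
  uniq l1 -> uniq l2 -> (size l1 <= size l2)%N ->
  [set x | x \in l1] #<= [set x | x \in l2].
Proof.
case: l1 => [|x0 l1] u1 u2 sz.
  by rewrite (_ : [set x | x \in [::]] = set0) //; apply/seteqP; split => x.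
set l := x0 :: l1.
pose f x := nth x0 l2 (index x l).
have inj : {in [set x | x \in l] &, injective f}.
  move=> x y; rewrite !in_setE /= => xl yl /eqP.
  rewrite /f nth_uniq //; last 2 first.
  - by apply: leq_trans sz; rewrite index_mem.
  - by apply: leq_trans sz; rewrite index_mem.
  by move=> /eqP E; rewrite -(nth_index x0 xl) E nth_index.
rewrite -(card_le_eql (inj_card_eq inj)); apply: subset_card_le.
move=> _ [x xl <-]; rewrite /= /f; apply: mem_nth.
by apply: leq_trans sz; rewrite index_mem.
Qed.

Lemma weak0 {R : realType} {n} (s : seq 'rV[R]_n) t : size t = size s -> weak s t 0.
Proof.
elim: s t => [|h s IH] [|b t] //= [st]; split; last exact: IH.
by rewrite /wcond ip0 mulr0.
Qed.

Lemma S1_eq {R : realType} {n m} (a : 'I_m -> 'rV[R]_n) (L : 'M[R]_n) :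
  [set C | regions a C /\ C `&` pts L !=set0] =
  cell (sa a) @` [set t | t \in seq.filter (Fpred (sa a) L) (signs m)].
Proof.
apply/seteqP; split.
  move=> C [/regionsP [t [st [w Hw] ->]] [x [Cx Lx]]].
  exists t => //; rewrite /= mem_filter mem_signs st eqxx andbT.
  by apply/asboolP; exists x.
move=> C [t]; rewrite /= mem_filter mem_signs => /andP [/asboolP [x [xL Hx]] /eqP st] <-.
by split; [apply/regionsP; exists t; split => //; exists x|exists x].
Qed.

Lemma S2_eq {R : realType} {n m} (a : 'I_m -> 'rV[R]_n) (L : 'M[R]_n) :
  [set C | regions a C /\ closure C `&` pts L != [set 0]] =
  cell (sa a) @` [set t | t \in seq.filter (Gpred (sa a) 1%:M L) (signs m)].
Proof.
apply/seteqP; split.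
  move=> C [/regionsP [t [st [w Hw] ->]]]; rewrite (closure_cell Hw) => /eqP NE.
  exists t => //; rewrite /= mem_filter mem_signs st eqxx andbT.
  apply/asboolP; split; first by exists w; rewrite submx1.
  apply: contrapT => Hn; apply: NE; apply/seteqP; split => y.
    move=> [Wy Ly]; apply: contrapT => y0; apply: Hn; exists y; split => //.
    by split => //; apply/eqP.
  by move=> ->; split; [apply: weak0; rewrite size_sa|exact: sub0mx].
move=> C [t]; rewrite /= mem_filter mem_signs => /andP [/asboolP [[w [_ Hw]] [y [yL [y0 Hy]]]] /eqP st] <-.
split; first by apply/regionsP; exists t; split => //; exists w.
rewrite (closure_cell Hw); apply/eqP => E.
have : ([set 0] : set 'rV[R]_n) y by rewrite -E.
by move=> /= y0'; move: y0; rewrite y0' eqxx.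
Qed.

Lemma cell_inj_in {R : realType} {n m} (a : 'I_m -> 'rV[R]_n) (P : pred (seq bool)) :
  (forall t, P t -> exists w, strict (sa a) t w) ->
  {in [set t | t \in seq.filter P (signs m)] &, injective (cell (sa a))}.
Proof.
move=> H t1 t2; rewrite !in_setE /= !mem_filter !mem_signs.
move=> /andP [/H [w Hw] /eqP s1] /andP [_ /eqP s2] E.
exact: cell_inj s1 s2 Hw E.
Qed.

Lemma Fpred_ex {R : realType} {n} (s : seq 'rV[R]_n) L t : Fpred s L t -> exists w, strict s t w.
Proof. by move/asboolP => [x [_ Hx]]; exists x. Qed.
Lemma Gpred_ex {R : realType} {n} (s : seq 'rV[R]_n) V L t : Gpred s V L t -> exists w, strict s t w.
Proof. by move/asboolP => [[x [_ Hx]] _]; exists x. Qed.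

Theorem lemma3p5 (R : realType) (n m d : nat) (a : 'I_m -> 'rV[R]_n)
    (L L' : 'M[R]_n) :
  arrangement a ->
  (d < n)%N ->
  \rank L = (n - d)%N ->
  \rank L' = (n - d)%N ->
  general_position a d L ->
  [/\ [set C | regions a C /\ closure C `&` pts L != [set 0]] =
        [set C | regions a C /\ C `&` pts L !=set0],
      [set C | regions a C /\ closure C `&` pts L != [set 0]] #<=
        [set C | regions a C /\ closure C `&` pts L' != [set 0]] &
      [set C | regions a C /\ C `&` pts L' !=set0] #<=
        [set C | regions a C /\ C `&` pts L !=set0]].
Proof.
move=> _ dn rL rL' gp.
have eqGF : seq.filter (Gpred (sa a) 1%:M L) (signs m) = seq.filter (Fpred (sa a) L) (signs m).
  apply: eq_in_filter => t; rewrite mem_signs => /eqP st; exact: (@claim1_pred _ _ _ d a L t dn rL gp st).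
have k0 : (0 < n - d)%N by rewrite subn_gt0.
have hF : forall L0 : 'M[R]_n, \rank L0 = (n - d)%N ->
    (count (Fpred (sa a) L0) (signs m) <= Wc (sa a) 1%:M (n - d))%N.
  by move=> L0 r0; have := F_le (sa a) 1%:M L0 (n - d)%N (submx1 L0) r0; rewrite /Fcnt size_sa.
have hG : forall L0 : 'M[R]_n, \rank L0 = (n - d)%N ->
    (Wc (sa a) 1%:M (n - d) <= count (Gpred (sa a) 1%:M L0) (signs m))%N.
  by move=> L0 r0; have := G_ge (sa a) 1%:M L0 (n - d)%N (submx1 L0) k0 (eq_leq (esym r0)); rewrite /Gcnt size_sa.
split.
- by rewrite S2_eq S1_eq eqGF.
- rewrite !S2_eq.
  rewrite (card_le_eql (inj_card_eq (cell_inj_in a _ (@Gpred_ex _ _ (sa a) 1%:M L)))).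
  rewrite (card_le_eqr (inj_card_eq (cell_inj_in a _ (@Gpred_ex _ _ (sa a) 1%:M L')))).
  apply: seq_card_le; rewrite ?filter_uniq ?uniq_signs // !size_filter.
  rewrite -size_filter eqGF size_filter.
  exact: leq_trans (hF L rL) (hG L' rL').
- rewrite !S1_eq.
  rewrite (card_le_eql (inj_card_eq (cell_inj_in a _ (@Fpred_ex _ _ (sa a) L')))).
  rewrite (card_le_eqr (inj_card_eq (cell_inj_in a _ (@Fpred_ex _ _ (sa a) L)))).
  apply: seq_card_le; rewrite ?filter_uniq ?uniq_signs // !size_filter.
  rewrite -[X in (_ <= X)%N]size_filter -eqGF size_filter.
  exact: leq_trans (hF L' rL') (hG L rL).
Qed.
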